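(* Let $r,s\in\mathbb C^\times$ with $r^j=s$ for some integer $j\ge0$, and let $C\in\mathbb C^\times$. Let $f(x,y)=\sum_{i=0}^b g_i(x)y^i\in\mathbb C[x,y]$ be a polynomial of degree $(a,b)$ such that $\deg g_i<o(r)$ for $0\le i\le b$. If $f(rx,\ sCx^j+sy)=r^as^bf(x,y)$, then $f(x,y)$ is a constant multiple of $x^a$.
   Context: The monomial $x^iy^k$ has degree $(i,k)$; degrees are ordered by $(i,k)>(i',k')$ iff $k>k'$, or $k=k'$ and $i>i'$; the degree of a nonzero polynomial is the largest degree of its monomials (so $b$ is the $y$-degree and $a=\deg g_b$). $o(r)$ is the multiplicative order of $r$ ($\infty$ if $r$ is not a root of unity). *)

(* Defs.v *)
From HB Require Import structures.
From mathcomp Require Import all_boot all_order all_algebra.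
Set Implicit Arguments. Unset Strict Implicit. Unset Printing Implicit Defensive.
Import Order.TTheory GRing.Theory Num.Theory.
Local Open Scope ring_scope.

(* Bivariate polynomials f(x,y) = \sum_i g_i(x) y^i are represented as
   f : {poly {poly R}}: the outer variable is y, the coefficients f`_i = g_i
   are polynomials in x. *)

Definition subst_rsC (R : fieldType) (r s C : R) (j : nat)
  (f : {poly {poly R}}) : {poly {poly R}} :=
  (map_poly (fun g : {poly R} => g \Po (r *: 'X)) f)
    \Po (((s * C) *: 'X^j)%:P + s%:P *: 'X).

(* y-degree of f (meaningful for f != 0) *)
Definition ydeg (R : fieldType) (f : {poly {poly R}}) : nat := (size f).-1.
Definition xdeg_lead (R : fieldType) (f : {poly {poly R}}) : nat :=
  (size (lead_coef f)).-1.

(* deg g < o(r), where o(r) is the multiplicative order of r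
   (infinite if r is not a root of unity, in which case the condition is vacuous). *)
Definition deg_lt_order (R : fieldType) (r : R) (g : {poly R}) : Prop :=
  forall n : nat, (0 < n)%N -> n.-primitive_root r -> ((size g).-1 < n)%N.

(* Main.v *)
Require Import Defs.
From HB Require Import structures.
From mathcomp Require Import all_boot all_order all_algebra.
Import Order.TTheory GRing.Theory Num.Theory.
Local Open Scope ring_scope.

Lemma coef_comp_scaleX (A : comNzRingType) (r : A) (g : {poly A}) k :
  (g \Po (r *: 'X))`_k = r ^+ k * g`_k.
Proof.
elim/poly_ind: g k => [|p c IH] k; first by rewrite comp_poly0 !coef0 mulr0.
rewrite comp_poly_MXaddC -scalerAr !coefD coefZ !coefC !coefMX.
case: k => [|k] /=; first by rewrite mulr0 add0r expr0 mul1r.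
by rewrite IH !addr0 mulrA -exprS.
Qed.

Section Q.
Variables (A : comNzRingType) (S d : A).
Let q := d%:P + S *: 'X.

Lemma coef_qpow_gt n k : (n < k)%N -> (q ^+ n)`_k = 0.
Proof.
elim: n k => [|n IH] k hk; first by rewrite expr0 coefC; case: k hk.
rewrite exprSr mulrDr coefD coefMC -scalerAr coefZ coefMX IH ?(ltnW hk) // mul0r add0r.
by case: k hk => // k hk /=; rewrite IH // mulr0.
Qed.

Lemma coef_qpow_n n : (q ^+ n)`_n = S ^+ n.
Proof.
elim: n => [|n IH]; first by rewrite !expr0 coefC.
rewrite exprSr mulrDr coefD coefMC -scalerAr coefZ coefMX /= IH coef_qpow_gt //.
by rewrite mul0r add0r mulrC exprSr.
Qed.

Lemma coef_qpow_n1 n : (q ^+ n.+1)`_n = (S ^+ n * d) *+ n.+1.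
Proof.
elim: n => [|n IH].
  by rewrite expr1 coefD coefC coefZ coefX /= mulr0 addr0 expr0 mul1r.
rewrite exprSr mulrDr coefD coefMC -scalerAr coefZ coefMX /= IH coef_qpow_n.
by rewrite mulrnAr mulrA -exprS [in RHS]mulrS.
Qed.
End Q.

Theorem mainTheorem17 (R : numClosedFieldType) (r s C : R) (j a b : nat)
  (f : {poly {poly R}}) :
  r != 0 -> s != 0 -> C != 0 -> r ^+ j = s ->
  f != 0 -> b = ydeg f -> a = xdeg_lead f ->
  (forall i : nat, (i <= b)%N -> deg_lt_order r f`_i) ->
  subst_rsC r s C j f = ((r ^+ a * s ^+ b)%:P)%:P * f ->
  exists c : R, f = (c *: 'X^a)%:P.
Proof.
move=> hr hs hC hrs f0 hb ha hdeg heq.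
set g := lead_coef f.
have hsz : size f = b.+1 by rewrite hb /ydeg prednK // size_poly_gt0.
have gb : f`_b = g by rewrite /g lead_coefE hsz.
have g0 : g != 0 by rewrite lead_coef_eq0.
have hga : size g = a.+1 by rewrite ha /xdeg_lead -/g prednK // size_poly_gt0.
set h := fun g : {poly R} => g \Po (r *: 'X).
have hg0 : h g != 0.
  apply/negP => /eqP hz; have := congr1 (fun p : {poly R} => p`_a) hz; rewrite /= coef_comp_scaleX coef0.
  move/eqP; rewrite mulf_eq0 expf_eq0 (negbTE hr) andbF /=.
  by rewrite -[a]/(a.+1.-1) -hga -lead_coefE lead_coef_eq0 (negbTE g0).
have coefphi : forall i, (map_poly h f)`_i = h f`_i.
  by move=> i; rewrite coef_map_id0 // /h comp_poly0.
have sizephi : size (map_poly h f) = b.+1 by rewrite size_map_poly_id0.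
have SX : forall n, (s%:P : {poly R}) ^+ n = (s ^+ n)%:P by move=> n; rewrite rmorphXn.
have E : forall k, \sum_(i < b.+1) h f`_i * ((((s * C) *: 'X^j)%:P + s%:P *: 'X) ^+ i)`_k
    = (r ^+ a * s ^+ b)%:P * f`_k.
  move=> k; have := congr1 (fun p : {poly {poly R}} => p`_k) heq; rewrite /= /subst_rsC coef_comp_poly sizephi coefCM.
  by move=> <-; apply: eq_bigr => i _; rewrite coefphi.
have E1 := E b.
rewrite big_ord_recr /= big1 ?add0r in E1; last first.
  by move=> i _; rewrite coef_qpow_gt ?mulr0.
rewrite coef_qpow_n gb SX in E1.
have Ek : forall k, (r ^+ k - r ^+ a) * g`_k = 0.
  move=> k; have := congr1 (fun p : {poly R} => p`_k) E1; rewrite /= coefMC coefCM coef_comp_scaleX.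
  move=> e; apply/eqP; rewrite mulrBl subr_eq0; apply/eqP.
  apply: (mulIf (expf_neq0 b hs)); rewrite e; by rewrite mulrAC.
have gX : g = g`_a *: 'X^a.
  apply/polyP => k; rewrite coefZ coefXn.
  have [->|nka] := eqVneq k a; first by rewrite mulr1.
  rewrite mulr0.
  have [ltak|ltka] := ltnP a k.
    by rewrite nth_default // hga.
  have ltka' : (k < a)%N by rewrite ltn_neqAle nka ltka.
  apply/eqP; apply: contraT => gk0.
  have := Ek k; move/eqP; rewrite mulf_eq0 (negbTE gk0) orbF subr_eq0 => /eqP rka.
  have ra1 : r ^+ (a - k) = 1.
    apply: (mulfI (expf_neq0 k hr)).
    by rewrite -exprD subnKC ?(ltnW ltka') // mulr1 rka.
  have ak0 : (0 < a - k)%N by rewrite subn_gt0.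
  have [m pm dm] := prim_order_exists ak0 ra1.
  have := hdeg b (leqnn b) m (prim_order_gt0 pm) pm; rewrite gb hga /=.
  have := dvdn_leq ak0 dm.
  move=> h1 h2; have := leq_trans h2 h1; rewrite ltnNge leq_subr //.
have c0 : g`_a != 0 by apply: contra g0 => /eqP c0; rewrite gX c0 scale0r.
case Eb: b => [|b'] in hsz gb E.
  exists g`_a; rewrite (size1_polyC (eq_leq hsz)) gb -gX //.
have E2 := E b'.
rewrite big_ord_recr big_ord_recr /= big1 ?add0r in E2; last first.
  by move=> i _; rewrite coef_qpow_gt ?mulr0.
rewrite coef_qpow_n coef_qpow_n1 gb SX in E2.
have := congr1 (fun p : {poly R} => p`_(a + j)) E2.
rewrite /= coefD coefMC coefCM coef_comp_scaleX mulrnAr coefMn.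
rewrite mul_polyC scalerA -scalerAr coefZ coefMXn ltnNge leq_addl /= addnK.
rewrite gX /h comp_polyZ coefZ coef_comp_scaleX coefXn eqxx mulr1.
have -> : r ^+ (a + j) * f`_b'`_(a + j) * s ^+ b' = r ^+ a * s ^+ b'.+1 * f`_b'`_(a + j).
  by rewrite exprD hrs exprS mulrAC mulrA mulrAC -!mulrA.
move/(canRL (addKr _)); rewrite addNr; move/eqP; rewrite mulrn_eq0 /=.
by rewrite !mulf_eq0 !expf_eq0 (negbTE hs) (negbTE hC) (negbTE c0) (negbTE hr) !andbF.
Qed.
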